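(* Let $\theta>0$. Then there are $\psi,\psi_1,\psi_2\in\mathrm{H}^\infty_0(S_\theta)$ with \[\sum_{n\in\mathbb{Z}}\psi_1(z-n)\,\psi_2(z-n)\,\psi(z-n)=1\qquad(z\in S_\theta).\]
   Context: $S_\theta=\{z\in\mathbb{C}:|\operatorname{Im}z|<\theta\}$. $\mathrm{H}^\infty_0(S_\theta)$ is the set of holomorphic functions $f$ on $S_\theta$ such that for every $\alpha>0$ there is $C$ with $|f(z)|\le C(1+|\operatorname{Re}z|)^{-\alpha}$ for all $z\in S_\theta$. *)

(* Defs.v *)
From Stdlib Require Import Reals ZArith.
From Coquelicot Require Import Coquelicot.
Open Scope R_scope.

Definition strip (theta : R) (z : C) : Prop := Rabs (Im z) < theta.

Definition holomorphic_on (U : C -> Prop) (f : C -> C) : Prop :=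
  forall z, U z -> exists l : C,
    forall eps, 0 < eps -> exists delta, 0 < delta /\
      forall w, U w -> 0 < Cmod (Cminus w z) < delta ->
        Cmod (Cminus (Cdiv (Cminus (f w) (f z)) (Cminus w z)) l) < eps.

Definition Hinf0 (theta : R) (f : C -> C) : Prop :=
  holomorphic_on (strip theta) f /\
  forall alpha, 0 < alpha -> exists K : R,
    forall z, strip theta z -> Cmod (f z) <= K * Rpower (1 + Rabs (Re z)) (- alpha).

Definition sumZ (g : Z -> C) (s : C) : Prop :=
  ex_series (fun k : nat => Cmod (g (Z.of_nat k))) /\
  ex_series (fun k : nat => Cmod (g (- Z.of_nat (S k))%Z)) /\
  exists a b : C,
    is_series (fun k : nat => g (Z.of_nat k)) a /\
    is_series (fun k : nat => g (- Z.of_nat (S k))%Z) b /\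
    Cplus a b = s.

(* Main.v *)
Require Import Defs.
From Stdlib Require Import Reals ZArith Lra Psatz.
From Coquelicot Require Import Coquelicot.
Open Scope R_scope.

Definition Hol (f : C -> C) (z : C) := exists l : C, @is_derive C_AbsRing (AbsRing_NormedModule C_AbsRing) f z l.

Lemma is_derive_C_intro (f : C -> C) z l :
  (forall eps, 0 < eps -> exists delta, 0 < delta /\ forall w, Cmod (w - z) < delta ->
     Cmod (f w - f z - l * (w - z)) <= eps * Cmod (w - z)) ->
  @is_derive C_AbsRing (AbsRing_NormedModule C_AbsRing) f z l.
Proof.
  intros H. split. apply is_linear_scal_l.
  intros x Hx. apply (@is_filter_lim_locally_unique C_AbsRing (AbsRing_NormedModule C_AbsRing)) in Hx. subst x.
  intros eps. destruct (H eps (cond_pos eps)) as [d [Hd Hw]].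
  apply (@locally_norm_le_locally C_AbsRing (AbsRing_NormedModule C_AbsRing) z). exists (mkposreal d Hd). intros w Hb.
  unfold ball_norm in Hb. change (Cmod (w - z) < d) in Hb.
  change (Cmod (f w - f z - (w - z) * l) <= eps * Cmod (w - z)).
  rewrite (Cmult_comm (w - z) l). apply Hw; exact Hb.
Qed.

Lemma is_derive_C_elim (f : C -> C) z l :
  @is_derive C_AbsRing (AbsRing_NormedModule C_AbsRing) f z l ->
  forall eps, 0 < eps -> exists delta, 0 < delta /\ forall w, 0 < Cmod (w - z) < delta ->
     Cmod (Cminus (Cdiv (Cminus (f w) (f z)) (Cminus w z)) l) < eps.
Proof.
  intros [_ H] eps Heps.
  assert (He2 : 0 < eps / 2) by lra.
  specialize (H z (fun P HP => HP) (mkposreal _ He2)).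
  apply (@locally_le_locally_norm C_AbsRing (AbsRing_NormedModule C_AbsRing)) in H. destruct H as [d Hd].
  exists d. split. apply cond_pos. intros w [Hw1 Hw2].
  assert (Hb : ball_norm z d w). unfold ball_norm. exact Hw2.
  specialize (Hd w Hb).
  change (Cmod (f w - f z - (w - z) * l) <= eps / 2 * Cmod (w - z)) in Hd.
  assert (Hnz : (w - z)%C <> 0%C). intro E. rewrite E, Cmod_0 in Hw1. lra.
  replace (Cminus (Cdiv (Cminus (f w) (f z)) (Cminus w z)) l)
    with (Cdiv (f w - f z - (w - z) * l) (w - z))%C.
  rewrite Cmod_div by exact Hnz.
  apply Rle_lt_trans with (eps / 2 * Cmod (w - z) / Cmod (w - z)).
  apply Rmult_le_compat_r. left. apply Rinv_0_lt_compat. exact Hw1. exact Hd.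
  field_simplify. lra. lra.
  unfold Cminus. field. exact Hnz.
Qed.

Lemma Hol_plus f g z : Hol f z -> Hol g z -> Hol (fun w => Cplus (f w) (g w)) z.
Proof. intros [l1 H1] [l2 H2]. exists (plus l1 l2). exact (@is_derive_plus C_AbsRing (AbsRing_NormedModule C_AbsRing) f g z l1 l2 H1 H2). Qed.

Lemma Hol_mult f g z : Hol f z -> Hol g z -> Hol (fun w => Cmult (f w) (g w)) z.
Proof. intros [l1 H1] [l2 H2]. eexists. exact (is_derive_mult f g z l1 l2 H1 H2 Cmult_comm). Qed.

Lemma Hol_const (c : C) z : Hol (fun _ => c) z.
Proof. eexists. exact (is_derive_const (V:=AbsRing_NormedModule C_AbsRing) c z). Qed.

Lemma Hol_id z : Hol (fun w => w) z.
Proof. eexists. exact (is_derive_id (K:=C_AbsRing) z). Qed.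

Lemma Hol_comp f g z : Hol g z -> Hol f (g z) -> Hol (fun w => f (g w)) z.
Proof. intros [l1 H1] [l2 H2]. eexists. exact (@is_derive_comp C_AbsRing (AbsRing_NormedModule C_AbsRing) f g z l2 l1 H2 H1). Qed.

Lemma Hol_ext f g z : (forall w, f w = g w) -> Hol f z -> Hol g z.
Proof. intros E [l H]. exists l. apply (@is_derive_ext C_AbsRing (AbsRing_NormedModule C_AbsRing) f g z l E H). Qed.

Lemma Hol_Cinv (z : C) : z <> 0%C -> Hol Cinv z.
Proof.
  intros Hz. exists (Copp (Cinv (Cmult z z))). apply is_derive_C_intro.
  intros eps Heps.
  assert (Hm : 0 < Cmod z) by (apply Cmod_gt_0; exact Hz).
  exists (Rmin (Cmod z / 2) (eps * (Cmod z * Cmod z * Cmod z) / 2)). split.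
  apply Rmin_pos. lra. apply Rdiv_lt_0_compat; [|lra]. apply Rmult_lt_0_compat; [lra|].
  apply Rmult_lt_0_compat; [|lra]. apply Rmult_lt_0_compat; lra.
  intros w Hw.
  assert (H1 := Rmin_l (Cmod z / 2) (eps * (Cmod z * Cmod z * Cmod z) / 2)).
  assert (H2 := Rmin_r (Cmod z / 2) (eps * (Cmod z * Cmod z * Cmod z) / 2)).
  assert (Hwz : Cmod z <= Cmod w + Cmod (w - z)).
  { replace z with (w + - (w - z))%C at 1 by ring. eapply Rle_trans. apply Cmod_triangle.
    rewrite Cmod_opp. lra. }
  assert (Hw0 : (w <> 0)%C). { intro E. subst w. rewrite Cmod_0 in Hwz. lra. }
  assert (Hwm : Cmod z / 2 <= Cmod w) by lra.
  replace (/ w - / z - - / (z * z) * (w - z))%C with ((w - z) * (w - z) / (w * (z * z)))%C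
    by (field; split; assumption).
  rewrite Cmod_div by (apply Cmult_neq_0; [assumption| apply Cmult_neq_0; assumption]).
  rewrite !Cmod_mult.
  set (h := Cmod (w - z)) in *. set (a := Cmod z) in *. set (b := Cmod w) in *.
  assert (Hh : 0 <= h) by apply Cmod_ge_0.
  apply Rle_trans with (h * h * 2 / (a * a * a)).
  { unfold Rdiv. rewrite !Rmult_assoc. apply Rmult_le_compat_l. lra.
    apply Rmult_le_compat_l. lra.
    replace (2 * / (a * (a * a))) with (/ (a / 2 * (a * a))) by (field; lra).
    apply Rinv_le_contravar.
    apply Rmult_lt_0_compat; [lra|]. apply Rmult_lt_0_compat; lra.
    apply Rmult_le_compat_r. apply Rmult_le_pos; lra. exact Hwm. }
  apply Rle_trans with (h * (eps * (a * a * a) / 2) * 2 / (a * a * a)).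
  { unfold Rdiv. apply Rmult_le_compat_r. left; apply Rinv_0_lt_compat.
    apply Rmult_lt_0_compat; [|lra]. apply Rmult_lt_0_compat; lra.
    apply Rmult_le_compat_r. lra. apply Rmult_le_compat_l. lra. lra. }
  right. field. lra.
Qed.

Definition cexp (z : C) : C := (exp (Re z) * cos (Im z), exp (Re z) * sin (Im z)).

Lemma cexp_add a b : cexp (a + b) = (cexp a * cexp b)%C.
Proof.
  destruct a as [a1 a2], b as [b1 b2]. unfold cexp, Cmult, Cplus, Re, Im; simpl.
  rewrite exp_plus, cos_plus, sin_plus. f_equal; ring.
Qed.

Lemma Cmod_cexp z : Cmod (cexp z) = exp (Re z).
Proof.
  unfold cexp, Cmod; cbn [fst snd].
  replace ((exp (Re z) * cos (Im z)) ^ 2 + (exp (Re z) * sin (Im z)) ^ 2)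
    with (exp (Re z) * exp (Re z) * ((sin (Im z))² + (cos (Im z))²)) by (unfold Rsqr; ring).
  rewrite sin2_cos2, Rmult_1_r.
  apply sqrt_square. left; apply exp_pos.
Qed.

Lemma cexp_RtoC r : cexp (RtoC r) = RtoC (exp r).
Proof. unfold cexp, RtoC; simpl. rewrite cos_0, sin_0. f_equal; ring. Qed.

Lemma cexp_neq0 z : cexp z <> 0%C.
Proof. intro E. assert (H := Cmod_cexp z). rewrite E, Cmod_0 in H. generalize (exp_pos (Re z)); lra. Qed.

Lemma Cmod_le_sum (x y : R) : Cmod (x, y) <= Rabs x + Rabs y.
Proof.
  unfold Cmod; cbn [fst snd]. rewrite <- (sqrt_square (Rabs x + Rabs y)).
  apply sqrt_le_1_alt. rewrite <- (pow2_abs x), <- (pow2_abs y).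
  generalize (Rabs_pos x) (Rabs_pos y). nra.
  generalize (Rabs_pos x) (Rabs_pos y). lra.
Qed.

Lemma exp_near a : Rabs a <= 1/2 -> 0 <= exp a - 1 - a <= 2 * a ^ 2.
Proof.
  intros Ha. apply Rabs_le_between in Ha. generalize (exp_ineq1_le a) (exp_ineq1_le (- a)).
  intros H1 H2. assert (H3 : exp a * exp (- a) = 1) by (rewrite <- exp_plus; replace (a + - a) with 0 by ring; apply exp_0).
  assert (H4 : exp a * (1 - a) <= 1). { rewrite <- H3. apply Rmult_le_compat_l. left; apply exp_pos. lra. }
  split. lra. nra.
Qed.

Lemma sin_near b : Rabs b <= 1 -> Rabs (sin b - b) <= b ^ 2.
Proof.
  intros Hb.
  assert (Hp : forall c, 0 <= c <= 1 -> Rabs (sin c - c) <= c ^ 2).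
  { intros c Hc. destruct (Req_dec c 0) as [E|E]. subst. rewrite sin_0. rewrite Rminus_0_r, Rabs_R0. lra.
    assert (H1 := sin_lt_x c ltac:(lra)).
    assert (HP : 1 <= PI) by (generalize PI2_1; lra).
    destruct (SIN c ltac:(lra) ltac:(lra)) as [H2 _].
    replace (sin_lb c) with (c - c^3/6 + c^5/120 - c^7/5040) in H2
      by (unfold sin_lb, sin_approx, sin_term; simpl; field).
    rewrite Rabs_left1 by lra.
    assert (c^3 <= c^2) by (simpl; nra). assert (c^5 <= c^2) by (simpl; nra). assert (c^7 <= c^2) by (simpl; nra).
    assert (0 <= c^5) by (apply pow_le; lra). nra. }
  destruct (Rle_dec 0 b). apply Hp. apply Rabs_le_between in Hb; lra.
  replace (sin b - b) with (- (sin (- b) - (- b))) by (rewrite sin_neg; ring).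
  rewrite Rabs_Ropp. replace (b ^ 2) with ((- b) ^ 2) by ring. apply Hp.
  apply Rabs_le_between in Hb; lra.
Qed.

Lemma cos_near b : Rabs b <= 1 -> Rabs (cos b - 1) <= b ^ 2.
Proof.
  intros Hb. apply Rabs_le_between in Hb.
  assert (HP : 1 <= PI / 2) by (generalize PI2_1; lra).
  destruct (COS b ltac:(lra) ltac:(lra)) as [H2 _].
  replace (cos_lb b) with (1 - b^2/2 + b^4/24 - b^6/720) in H2
      by (unfold cos_lb, cos_approx, cos_term; simpl; field).
  generalize (COS_bound b). intros [_ H3].
  rewrite Rabs_left1 by lra.
  assert (b^2 <= 1) by (simpl; nra). assert (0 <= b^4) by (simpl; nra).
  assert (b^6 <= b^2) by (simpl; nra). nra.
Qed.

Lemma cexp_near h : Cmod h <= 1/2 -> Cmod (cexp h - 1 - h) <= 8 * Cmod h ^ 2.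
Proof.
  intros Hh. destruct h as [a b].
  assert (Hab := Rmax_Cmod (a, b)). cbn [fst snd] in Hab.
  assert (Ha : Rabs a <= Cmod (a, b)) by (eapply Rle_trans; [apply Rmax_l|exact Hab]).
  assert (Hb : Rabs b <= Cmod (a, b)) by (eapply Rle_trans; [apply Rmax_r|exact Hab]).
  set (m := Cmod (a, b)) in *.
  replace (cexp (a, b) - 1 - (a, b))%C with (RtoC (exp a * cos b - 1 - a) + Ci * RtoC (exp a * sin b - b))%C.
  2:{ unfold cexp, RtoC, Ci, Cmult, Cminus, Re, Im; cbn [fst snd]. apply injective_projections; simpl; ring. }
  eapply Rle_trans. apply Cmod_triangle. rewrite Cmod_mult, Cmod_Ci, !Cmod_R, Rmult_1_l.
  destruct (exp_near a ltac:(lra)) as [E1 E2].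
  assert (C1 := cos_near b ltac:(lra)). assert (S1 := sin_near b ltac:(lra)).
  assert (Hea : Rabs (exp a - 1) <= 2 * Rabs a).
  { apply Rabs_le_between in Ha. apply Rabs_le_between. split.
    - destruct (Rle_dec 0 a). rewrite Rabs_right by lra. nra. rewrite Rabs_left by lra. nra.
    - destruct (Rle_dec 0 a). rewrite Rabs_right by lra. nra. rewrite Rabs_left by lra. nra. }
  assert (Hex : exp a <= 2). { apply Rabs_le_between in Ha. nra. }
  assert (Hsb : Rabs (sin b) <= Rabs b).
  { destruct (Rle_dec 0 b). destruct (Req_dec b 0). subst; rewrite sin_0; lra.
    assert (HP : 1 <= PI) by (generalize PI2_1; lra).
    assert (0 <= sin b) by (apply sin_ge_0; apply Rabs_le_between in Hb; lra).
    rewrite !Rabs_right by lra. left; apply sin_lt_x; lra.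
    assert (HP : 1 <= PI) by (generalize PI2_1; lra).
    assert (0 <= sin (-b)) by (apply sin_ge_0; apply Rabs_le_between in Hb; lra).
    rewrite sin_neg in H. rewrite (Rabs_left b) by lra. rewrite Rabs_left1 by lra.
    assert (sin (- b) < - b) by (apply sin_lt_x; lra). rewrite sin_neg in H0. lra. }
  replace (exp a * cos b - 1 - a) with ((exp a - 1 - a) + exp a * (cos b - 1)) by ring.
  replace (exp a * sin b - b) with ((exp a - 1) * sin b + (sin b - b)) by ring.
  assert (T1 : Rabs ((exp a - 1 - a) + exp a * (cos b - 1)) <= 2 * a^2 + 2 * b^2).
  { eapply Rle_trans. apply Rabs_triang. rewrite Rabs_mult, (Rabs_right (exp a)) by (left; apply exp_pos).
    rewrite Rabs_right by lra. generalize (Rabs_pos (cos b - 1)) (exp_pos a). nra. }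
  assert (T2 : Rabs ((exp a - 1) * sin b + (sin b - b)) <= 2 * Rabs a * Rabs b + b^2).
  { eapply Rle_trans. apply Rabs_triang. rewrite Rabs_mult.
    generalize (Rabs_pos (exp a - 1)) (Rabs_pos (sin b)) (Rabs_pos a). nra. }
  assert (a^2 <= m^2) by (rewrite <- (pow2_abs a); generalize (Rabs_pos a); nra).
  assert (b^2 <= m^2) by (rewrite <- (pow2_abs b); generalize (Rabs_pos b); nra).
  assert (Rabs a * Rabs b <= m^2) by (generalize (Rabs_pos a) (Rabs_pos b); nra).
  lra.
Qed.

Lemma Hol_cexp z : Hol cexp z.
Proof.
  exists (cexp z). apply is_derive_C_intro. intros eps Heps.
  set (K := Cmod (cexp z)).
  assert (HK : 0 < K) by (unfold K; rewrite Cmod_cexp; apply exp_pos).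
  exists (Rmin (1/2) (eps / (8 * K))). split.
  apply Rmin_pos. lra. apply Rdiv_lt_0_compat; lra.
  intros w Hw.
  assert (H1 := Rmin_l (1/2) (eps / (8 * K))). assert (H2 := Rmin_r (1/2) (eps / (8 * K))).
  replace (cexp w - cexp z - cexp z * (w - z))%C with (cexp z * (cexp (w - z) - 1 - (w - z)))%C.
  2:{ assert (Ew : cexp w = (cexp z * cexp (w - z))%C) by (rewrite <- cexp_add; f_equal; ring). rewrite Ew. ring. }
  rewrite Cmod_mult. fold K.
  assert (Hn := cexp_near (w - z) ltac:(lra)).
  set (h := Cmod (w - z)) in *. assert (0 <= h) by apply Cmod_ge_0.
  apply Rle_trans with (K * (8 * h ^ 2)). apply Rmult_le_compat_l; lra.
  assert (h * (8 * K) <= eps).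
  { apply Rle_trans with (eps / (8 * K) * (8 * K)). apply Rmult_le_compat_r; lra. right; field; lra. }
  simpl. nra.
Qed.

Lemma geom_small q M : 0 <= q < 1 -> 0 <= M -> forall eps, 0 < eps ->
  exists N, forall n, (N <= n)%nat -> M * q ^ n < eps.
Proof.
  intros Hq HM eps Heps.
  destruct (pow_lt_1_zero q ltac:(rewrite Rabs_right; lra) (eps / (M + 1)) ltac:(apply Rdiv_lt_0_compat; lra)) as [N HN].
  exists N. intros n Hn. specialize (HN n Hn). rewrite Rabs_right in HN by (apply Rle_ge, pow_le; lra).
  apply Rle_lt_trans with ((M + 1) * q ^ n). apply Rmult_le_compat_r. apply pow_le; lra. lra.
  apply Rmult_lt_compat_l with (r := M + 1) in HN; [|lra].
  replace ((M + 1) * (eps / (M + 1))) with eps in HN by (field; lra). exact HN.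
Qed.

Lemma lim_C_geom (c : nat -> C) (L : C) q M : 0 <= q < 1 -> 0 <= M ->
  (forall n, Cmod (c n - L) <= M * q ^ n) ->
  filterlim c eventually (locally (L : C_NormedModule)).
Proof.
  intros Hq HM H. apply (filterlim_locally_ball_norm (K:=C_AbsRing)). intros eps.
  destruct (geom_small q M Hq HM eps (cond_pos eps)) as [N HN]. exists N. intros n Hn.
  unfold ball_norm. change (Cmod (c n - L) < eps). eapply Rle_lt_trans. apply H. apply HN, Hn.
Qed.

Lemma telescope (c : nat -> C) (L : C) :
  filterlim c eventually (locally (L : C_NormedModule)) ->
  is_series (fun n => (c n - c (S n))%C) (c O - L)%C.
Proof.
  intros H. unfold is_series.
  assert (Hs : forall N, sum_n (fun n => (c n - c (S n))%C) N = (c O - c (S N))%C).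
  { induction N. rewrite sum_O. reflexivity. rewrite sum_Sn, IHN.
    change (Cplus (c O - c (S N)) (c (S N) - c (S (S N))) = (c O - c (S (S N))))%C. ring. }
  apply (filterlim_locally_ball_norm (K:=C_AbsRing)). intros eps.
  destruct (proj1 (@filterlim_locally_ball_norm C_AbsRing nat C_NormedModule eventually _ c L) H eps) as [N HN].
  exists N. intros n Hn. rewrite Hs. specialize (HN (S n) ltac:(lia)).
  unfold ball_norm in *. change (Cmod (c (S n) - L) < eps) in HN.
  change (Cmod ((c O - c (S n)) - (c O - L)) < eps).
  replace ((c O - c (S n)) - (c O - L))%C with (- (c (S n) - L))%C by ring.
  rewrite Cmod_opp. exact HN.
Qed.

Lemma ex_series_geom_bound (f : nat -> R) q M : 0 <= q < 1 ->
  (forall n, Rabs (f n) <= M * q ^ n) -> ex_series f.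
Proof.
  intros Hq H. apply (ex_series_le (K:=R_AbsRing) (V:=R_CompleteNormedModule) f (fun n => M * q ^ n)).
  intros n. apply H.
  apply (ex_series_scal_l (K:=R_AbsRing) (V:=R_NormedModule) M (fun n => q ^ n)).
  apply ex_series_geom. rewrite Rabs_right; lra.
Qed.

Definition F (s : C) : C := Cinv ((1 + s) * (1 + s))%C.

Lemma re_pos_bounds s : 0 <= Re s -> 1 <= Cmod (1 + s) /\ Cmod s <= Cmod (1 + s).
Proof.
  intros H. assert (A := Cmod2_alt (1 + s)). assert (B := Cmod2_alt s).
  assert (Re (1 + s) = 1 + Re s) by (destruct s; unfold Re, Cplus, RtoC; simpl; ring). assert (Im (1 + s) = Im s) by (destruct s; unfold Im, Cplus, RtoC; simpl; ring).
  rewrite H0, H1 in A. generalize (Cmod_ge_0 (1 + s)) (Cmod_ge_0 s). intros. split; nra.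
Qed.

Lemma one_plus_nz s : 0 <= Re s -> (1 + s)%C <> 0%C.
Proof. intros H E. destruct (re_pos_bounds s H) as [H1 _]. rewrite E, Cmod_0 in H1. lra. Qed.

Lemma Cmod_F s : 0 <= Re s -> Cmod (F s) = / (Cmod (1 + s) * Cmod (1 + s)).
Proof.
  intros H. unfold F. rewrite Cmod_inv, Cmod_mult. reflexivity.
  apply Cmult_neq_0; apply one_plus_nz; exact H.
Qed.

Lemma F_bound s : 0 <= Re s -> s <> 0%C -> Cmod (F s) <= / (Cmod s * Cmod s).
Proof.
  intros H Hs. rewrite Cmod_F by exact H. destruct (re_pos_bounds s H) as [H1 H2].
  assert (0 < Cmod s) by (apply Cmod_gt_0; exact Hs).
  apply Rinv_le_contravar. nra. nra.
Qed.

Lemma F_le1 s : 0 <= Re s -> Cmod (F s) <= 1.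
Proof.
  intros H. rewrite Cmod_F by exact H. destruct (re_pos_bounds s H) as [H1 H2].
  set (m := Cmod (1 + s)) in *. rewrite <- Rinv_1. apply Rinv_le_contravar. lra. nra.
Qed.

Lemma F_near1 s : 0 <= Re s -> Cmod (F s - 1) <= Cmod s * (2 + Cmod s).
Proof.
  intros H. assert (Hn := one_plus_nz s H).
  replace (F s - 1)%C with (- (s * (2 + s)) * F s)%C by (unfold F; field; exact Hn).
  rewrite Cmod_mult, Cmod_opp, Cmod_mult.
  assert (Cmod (2 + s) <= 2 + Cmod s).
  { eapply Rle_trans. apply Cmod_triangle. rewrite Cmod_R, Rabs_right; lra. }
  generalize (F_le1 s H) (Cmod_ge_0 s) (Cmod_ge_0 (2 + s)) (Cmod_ge_0 (F s)). intros.
  apply Rle_trans with (Cmod s * Cmod (2 + s) * 1). apply Rmult_le_compat_l. nra. lra.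
  rewrite Rmult_1_r. apply Rmult_le_compat_l; lra.
Qed.

Lemma Re_scal (r : R) (s : C) : Re (RtoC r * s) = r * Re s.
Proof. destruct s; simpl; ring. Qed.

Lemma ln_le_sub1 t : 0 < t -> ln t <= t - 1.
Proof.
  intros Ht. rewrite <- (ln_exp (t - 1)). apply ln_le. exact Ht.
  generalize (exp_ineq1_le (t - 1)). lra.
Qed.

Lemma decay_bound (f : C -> C) theta k A : 0 < k -> 0 <= A ->
  (forall z, strip theta z -> Cmod (f z) <= A * exp (- k * Rabs (Re z))) ->
  forall alpha, 0 < alpha -> exists K : R,
    forall z, strip theta z -> Cmod (f z) <= K * Rpower (1 + Rabs (Re z)) (- alpha).
Proof.
  intros Hk HA H alpha Ha.
  set (m := alpha / k).
  assert (Hm : 0 < m) by (unfold m; apply Rdiv_lt_0_compat; lra).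
  exists (A * exp (k + alpha * (ln m - 1))). intros z Hz.
  eapply Rle_trans. apply H, Hz. rewrite Rmult_assoc. apply Rmult_le_compat_l. exact HA.
  set (x := Rabs (Re z)). assert (Hx : 0 <= x) by apply Rabs_pos.
  unfold Rpower. rewrite <- exp_plus.
  assert (Hl : ln ((1 + x) / m) <= (1 + x) / m - 1) by (apply ln_le_sub1; apply Rdiv_lt_0_compat; lra).
  rewrite ln_div in Hl by lra.
  assert (Hl2 : alpha * ln (1 + x) <= alpha * ln m + k * (1 + x) - alpha).
  { replace (k * (1 + x)) with (alpha * ((1 + x) / m)) by (unfold m; field; lra). nra. }
  destruct (Req_dec (- k * x) (k + alpha * (ln m - 1) + - alpha * ln (1 + x))) as [E|E].
  rewrite E; lra. left; apply exp_increasing. nra.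
Qed.

Lemma rmin_exp k x : 0 <= k -> Rmin (exp (- k * x)) (/ exp (- k * x)) = exp (- k * Rabs x).
Proof.
  intros Hk. rewrite <- exp_Ropp. destruct (Rle_dec 0 x).
  - rewrite Rabs_right by lra. apply Rmin_left.
    destruct (Req_dec (- k * x) (- (- k * x))) as [E|E]. rewrite <- E; lra. left; apply exp_increasing; nra.
  - rewrite Rabs_left by lra. replace (- k * - x) with (- (- k * x)) by ring. apply Rmin_right.
    destruct (Req_dec (- k * x) (- (- k * x))) as [E|E]. rewrite <- E; lra. left; apply exp_increasing; nra.
Qed.

Lemma bound1 r D : 0 < r -> 1 <= D -> r ^ 3 <= D -> r / D <= Rmin r (/ r).
Proof.
  intros Hr H1 H2. unfold Rmin. destruct (Rle_dec r (/ r)).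
  - unfold Rdiv. rewrite <- (Rmult_1_r r) at 2. apply Rmult_le_compat_l. lra.
    rewrite <- Rinv_1. apply Rinv_le_contravar; lra.
  - assert (1 < r). { destruct (Rle_dec r 1). assert (1 <= / r). rewrite <- Rinv_1. apply Rinv_le_contravar; lra. lra. lra. }
    apply Rle_trans with (r / r ^ 3). unfold Rdiv. apply Rmult_le_compat_l. lra.
    apply Rinv_le_contravar. apply pow_lt; lra. lra.
    replace (r / r ^ 3) with ((/ r) * (/ r)) by (field; lra).
    apply Rle_trans with ((/ r) * 1); [|lra]. apply Rmult_le_compat_l. left; apply Rinv_0_lt_compat; lra.
    rewrite <- Rinv_1. apply Rinv_le_contravar; nra.
Qed.

Lemma bound3 r D1 D2 T : 0 < r -> 1 <= T -> 1 <= D1 -> r ^ 3 <= D1 -> 1 <= D2 -> r ^ 3 <= D2 ->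
  r * (2 + (T + 1) * r ^ 3) / (D1 * D2) <= (T + 3) * Rmin r (/ r).
Proof.
  intros Hr HT H1 H2 H3 H4. unfold Rmin. assert (Hr3 : 0 < r ^ 3) by (apply pow_lt; lra).
  assert (HD : 0 < D1 * D2) by nra.
  apply Rle_trans with (r * (2 + (T + 1) * r ^ 3) / (Rmax 1 (r ^ 3) * Rmax 1 (r ^ 3))).
  { unfold Rdiv. apply Rmult_le_compat_l. nra. apply Rinv_le_contravar.
    apply Rmult_lt_0_compat; apply Rlt_le_trans with 1; try lra; apply Rmax_l.
    apply Rmult_le_compat; try (apply Rle_trans with 1; [lra|apply Rmax_l]); apply Rmax_lub; lra. }
  destruct (Rle_dec r (/ r)).
  - assert (r <= 1). { destruct (Rle_dec r 1). lra. assert (/ r < 1). rewrite <- Rinv_1. apply Rinv_lt_contravar; lra. lra. }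
    assert (r ^ 3 <= 1) by (simpl; nra).
    rewrite Rmax_left by lra. unfold Rdiv. rewrite Rmult_1_l, Rinv_1, Rmult_1_r.
    assert ((T + 1) * r ^ 3 <= T + 1) by (apply Rle_trans with ((T + 1) * 1); [apply Rmult_le_compat_l; lra | lra]).
    rewrite Rmult_comm. apply Rmult_le_compat_r; lra.
  - assert (1 < r). { destruct (Rle_dec r 1). assert (1 <= / r). rewrite <- Rinv_1. apply Rinv_le_contravar; lra. lra. lra. }
    assert (1 <= r ^ 3) by (simpl; nra).
    rewrite Rmax_right by lra.
    apply Rle_trans with (r * ((T + 3) * r ^ 3) / (r ^ 3 * r ^ 3)).
    { unfold Rdiv. apply Rmult_le_compat_r. left; apply Rinv_0_lt_compat; nra. nra. }
    replace (r * ((T + 3) * r ^ 3) / (r ^ 3 * r ^ 3)) with ((T + 3) * (/ r) * (/ r)) by (field; lra).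
    apply Rle_trans with ((T + 3) * (/ r) * 1); [|lra]. apply Rmult_le_compat_l.
    apply Rmult_le_pos. lra. left; apply Rinv_0_lt_compat; lra.
    rewrite <- Rinv_1. apply Rinv_le_contravar; nra.
Qed.

Definition uu (k : R) (z : C) : C := cexp (RtoC (- k) * z).
Definition EE (k : R) (z : C) : C := (uu k z * uu k z * uu k z)%C.
Definition ps1 (k T : R) (z : C) : C := (uu k z * Cinv (1 + EE k z))%C.
Definition ps2 (k T : R) (z : C) : C := (uu k z * Cinv (1 + RtoC T * EE k z))%C.
Definition ps (k T : R) (z : C) : C :=
  (RtoC (T - 1) * uu k z * (2 + RtoC (T + 1) * EE k z) * Cinv (1 + EE k z) * Cinv (1 + RtoC T * EE k z))%C.

Lemma EE_cexp k z : EE k z = cexp (RtoC (- (3 * k)) * z).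
Proof.
  unfold EE, uu. rewrite <- !cexp_add. f_equal.
  replace (RtoC (- (3 * k))) with (RtoC (- k) + RtoC (- k) + RtoC (- k))%C by (rewrite <- !RtoC_plus; f_equal; ring).
  ring.
Qed.

Lemma Im_scal (r : R) (s : C) : Im (RtoC r * s) = r * Im s.
Proof. destruct s; simpl; ring. Qed.

Lemma Cmod_uu k z : Cmod (uu k z) = exp (- k * Re z).
Proof. unfold uu. rewrite Cmod_cexp, Re_scal. reflexivity. Qed.

Lemma Cmod_EE k z : Cmod (EE k z) = exp (- k * Re z) ^ 3.
Proof. unfold EE. rewrite !Cmod_mult, Cmod_uu. ring. Qed.

Lemma EE_re_pos theta k z : 0 < k -> 3 * k * theta <= 1 -> strip theta z -> 0 < Re (EE k z).
Proof.
  intros Hk Ht Hz. unfold strip in Hz. rewrite EE_cexp. unfold cexp at 1. simpl Re at 1.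
  replace (- (3 * k) * snd z + 0 * fst z) with (-(3*k) * Im z) by (unfold Im; ring).
  apply Rmult_lt_0_compat. apply exp_pos. apply cos_gt_0.
  - apply Rabs_def2 in Hz. generalize PI2_1. nra.
  - apply Rabs_def2 in Hz. generalize PI2_1. nra.
Qed.

Lemma prod_id k T w : 0 < T -> 0 <= Re (EE k w) ->
  (ps1 k T w * ps2 k T w * ps k T w)%C = (F (EE k w) - F (RtoC T * EE k w))%C.
Proof.
  intros HT Hr. assert (n1 := one_plus_nz _ Hr).
  assert (Hr2 : 0 <= Re (RtoC T * EE k w)) by (rewrite Re_scal; nra).
  assert (n2 := one_plus_nz _ Hr2).
  unfold ps1, ps2, ps, F. rewrite RtoC_minus, RtoC_plus.
  set (s := EE k w) in *. set (t := RtoC T) in *.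
  unfold EE in s. set (u := uu k w) in *.
  assert (Hs : s = (u * u * u)%C) by reflexivity. clearbody s u t. subst s.
  field. split; assumption.
Qed.

Lemma Hol_uu k z : Hol (uu k) z.
Proof.
  unfold uu. apply (Hol_comp cexp (fun w => RtoC (- k) * w)%C).
  apply Hol_mult; [apply Hol_const | apply Hol_id]. apply Hol_cexp.
Qed.

Lemma Hol_EE k z : Hol (EE k) z.
Proof. unfold EE. apply Hol_mult; [apply Hol_mult|]; apply Hol_uu. Qed.

Lemma Hol_inv_comp g z : Hol g z -> g z <> 0%C -> Hol (fun w => Cinv (g w)) z.
Proof. intros H Hz. apply (Hol_comp Cinv g z H (Hol_Cinv _ Hz)). Qed.

Lemma Hol_holo (U : C -> Prop) f : (forall z, U z -> Hol f z) -> holomorphic_on U f.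
Proof.
  intros H z Hz. destruct (H z Hz) as [l Hl]. exists l. intros eps Heps.
  destruct (is_derive_C_elim f z l Hl eps Heps) as [d [Hd Hw]].
  exists d. split. exact Hd. intros w _ Hw'. apply Hw, Hw'.
Qed.

Section Main.
Variables (theta k T : R).
Hypotheses (Hk : 0 < k) (Hkt : 3 * k * theta <= 1) (HT : 1 <= T).

Lemma Re_EE_nn z : strip theta z -> 0 <= Re (EE k z).
Proof. intros Hz. left. apply (EE_re_pos theta); assumption. Qed.

Lemma Re_TEE_nn z : strip theta z -> 0 <= Re (RtoC T * EE k z).
Proof. intros Hz. rewrite Re_scal. apply Rmult_le_pos. lra. apply Re_EE_nn, Hz. Qed.

Lemma holo_ps1 : holomorphic_on (strip theta) (ps1 k T).
Proof.
  apply Hol_holo. intros z Hz. unfold ps1. apply Hol_mult. apply Hol_uu.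
  apply Hol_inv_comp. apply Hol_plus. apply Hol_const. apply Hol_EE.
  apply one_plus_nz, Re_EE_nn, Hz.
Qed.

Lemma holo_ps2 : holomorphic_on (strip theta) (ps2 k T).
Proof.
  apply Hol_holo. intros z Hz. unfold ps2. apply Hol_mult. apply Hol_uu.
  apply Hol_inv_comp. apply Hol_plus. apply Hol_const. apply Hol_mult. apply Hol_const. apply Hol_EE.
  apply one_plus_nz, Re_TEE_nn, Hz.
Qed.

Lemma holo_ps : holomorphic_on (strip theta) (ps k T).
Proof.
  apply Hol_holo. intros z Hz. unfold ps.
  apply Hol_mult. apply Hol_mult. apply Hol_mult. apply Hol_mult.
  apply Hol_const. apply Hol_uu.
  apply Hol_plus. apply Hol_const. apply Hol_mult. apply Hol_const. apply Hol_EE.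
  apply Hol_inv_comp. apply Hol_plus. apply Hol_const. apply Hol_EE.
  apply one_plus_nz, Re_EE_nn, Hz.
  apply Hol_inv_comp. apply Hol_plus. apply Hol_const. apply Hol_mult. apply Hol_const. apply Hol_EE.
  apply one_plus_nz, Re_TEE_nn, Hz.
Qed.

Lemma D1_facts z : strip theta z ->
  1 <= Cmod (1 + EE k z) /\ exp (- k * Re z) ^ 3 <= Cmod (1 + EE k z) /\ (1 + EE k z)%C <> 0%C.
Proof.
  intros Hz. destruct (re_pos_bounds _ (Re_EE_nn z Hz)) as [H1 H2]. rewrite Cmod_EE in H2.
  split; [|split]; try assumption. apply one_plus_nz, Re_EE_nn, Hz.
Qed.

Lemma D2_facts z : strip theta z ->
  1 <= Cmod (1 + RtoC T * EE k z) /\ exp (- k * Re z) ^ 3 <= Cmod (1 + RtoC T * EE k z)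
  /\ (1 + RtoC T * EE k z)%C <> 0%C.
Proof.
  intros Hz. destruct (re_pos_bounds _ (Re_TEE_nn z Hz)) as [H1 H2].
  rewrite Cmod_mult, Cmod_EE, Cmod_R, Rabs_right in H2 by lra.
  assert (0 <= exp (- k * Re z) ^ 3) by (apply pow_le; left; apply exp_pos).
  split; [|split]; try assumption. nra. apply one_plus_nz, Re_TEE_nn, Hz.
Qed.

Lemma dec_ps1 z : strip theta z -> Cmod (ps1 k T z) <= 1 * exp (- k * Rabs (Re z)).
Proof.
  intros Hz. destruct (D1_facts z Hz) as [H1 [H2 H3]].
  unfold ps1. rewrite Cmod_mult, Cmod_inv by exact H3. rewrite Cmod_uu, Rmult_1_l.
  rewrite <- rmin_exp by lra. apply bound1; try assumption. apply exp_pos.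
Qed.

Lemma dec_ps2 z : strip theta z -> Cmod (ps2 k T z) <= 1 * exp (- k * Rabs (Re z)).
Proof.
  intros Hz. destruct (D2_facts z Hz) as [H1 [H2 H3]].
  unfold ps2. rewrite Cmod_mult, Cmod_inv by exact H3. rewrite Cmod_uu, Rmult_1_l.
  rewrite <- rmin_exp by lra. apply bound1; try assumption. apply exp_pos.
Qed.

Lemma dec_ps z : strip theta z -> Cmod (ps k T z) <= ((T - 1) * (T + 3)) * exp (- k * Rabs (Re z)).
Proof.
  intros Hz. destruct (D1_facts z Hz) as [H1 [H2 H3]]. destruct (D2_facts z Hz) as [H4 [H5 H6]].
  unfold ps. rewrite !Cmod_mult, !Cmod_inv by assumption. rewrite Cmod_uu, Cmod_R, Rabs_right by lra.
  rewrite <- rmin_exp by lra.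
  set (r := exp (- k * Re z)) in *. assert (Hr : 0 < r) by apply exp_pos.
  assert (Hn : Cmod (2 + RtoC (T + 1) * EE k z) <= 2 + (T + 1) * r ^ 3).
  { eapply Rle_trans. apply Cmod_triangle. rewrite Cmod_mult, !Cmod_R, Cmod_EE. fold r. rewrite (Rabs_right 2), (Rabs_right (T + 1)) by lra. lra. }
  assert (B := bound3 r _ _ T Hr HT H1 H2 H4 H5).
  set (N := Cmod (2 + RtoC (T + 1) * EE k z)) in *.
  set (D1 := Cmod (1 + EE k z)) in *. set (D2 := Cmod (1 + RtoC T * EE k z)) in *.
  replace ((T - 1) * r * N * / D1 * / D2) with ((T - 1) * (r * N / (D1 * D2))) by (field; lra).
  rewrite Rmult_assoc. apply Rmult_le_compat_l. lra.
  eapply Rle_trans; [|exact B]. unfold Rdiv. apply Rmult_le_compat_r.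
  left; apply Rinv_0_lt_compat; nra. apply Rmult_le_compat_l; lra.
Qed.

End Main.

Lemma exp_nat a n : exp (INR n * a) = exp a ^ n.
Proof.
  induction n. simpl. rewrite Rmult_0_l. apply exp_0.
  rewrite S_INR, Rmult_plus_distr_r, Rmult_1_l, exp_plus, IHn. simpl. ring.
Qed.

Lemma shift_pos k z n : EE k (z - RtoC (IZR (Z.of_nat n))) = (RtoC (exp (3 * k) ^ n) * EE k z)%C.
Proof.
  rewrite !EE_cexp, <- INR_IZR_INZ, <- exp_nat, <- cexp_RtoC, <- cexp_add. f_equal.
  destruct z as [x y]. unfold RtoC, Cmult, Cplus, Cminus, Copp.
  apply injective_projections; simpl; ring.
Qed.

Lemma shift_neg k z j : EE k (z - RtoC (IZR (- Z.of_nat (S j)))) = (RtoC ((/ exp (3 * k)) ^ (S j)) * EE k z)%C.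
Proof.
  rewrite !EE_cexp, opp_IZR, <- INR_IZR_INZ, pow_inv, <- exp_nat, <- exp_Ropp, <- cexp_RtoC, <- cexp_add. f_equal.
  destruct z as [x y]. unfold RtoC, Cmult, Cplus, Cminus, Copp.
  apply injective_projections; simpl; ring.
Qed.

Lemma tele_all (c : nat -> C) M q : 0 <= q < 1 -> 0 <= M -> (forall n, Cmod (c n) <= M * q ^ n) ->
  ex_series (fun n => Cmod (c n - c (S n))) /\ is_series (fun n => (c n - c (S n))%C) (c O).
Proof.
  intros Hq HM H. split.
  - apply (ex_series_geom_bound _ q (2 * M) Hq). intros n.
    rewrite Rabs_right by (apply Rle_ge, Cmod_ge_0).
    unfold Cminus. eapply Rle_trans. apply Cmod_triangle. rewrite Cmod_opp.
    assert (H1 := H n). assert (H2 := H (S n)). simpl in H2.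
    assert (0 <= q ^ n) by (apply pow_le; lra).
    assert (M * (q * q ^ n) <= M * q ^ n) by (apply Rmult_le_compat_l; nra). lra.
  - assert (Hl : filterlim c eventually (locally ((0%C : C) : C_NormedModule))).
    { apply (lim_C_geom c 0 q M Hq HM). intros n. replace (c n - 0)%C with (c n) by ring. apply H. }
    assert (Ht := telescope c 0 Hl). replace (c O - 0)%C with (c O) in Ht by ring. exact Ht.
Qed.

Lemma sum_part theta k z : 0 < k -> 3 * k * theta <= 1 -> strip theta z ->
  sumZ (fun n : Z =>
          let w := Cminus z (RtoC (IZR n)) in
          Cmult (Cmult (ps1 k (exp (3 * k)) w) (ps2 k (exp (3 * k)) w)) (ps k (exp (3 * k)) w))
       (RtoC 1).
Proof.
  intros Hk Hkt Hz.
  set (T := exp (3 * k)).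
  assert (HT : 1 < T) by (unfold T; generalize (exp_ineq1 (3 * k) ltac:(lra)); lra).
  set (e := EE k z).
  assert (He : 0 < Re e) by (apply (EE_re_pos theta); assumption).
  assert (He0 : e <> 0%C) by (unfold e; rewrite EE_cexp; apply cexp_neq0).
  assert (Hm : 0 < Cmod e) by (apply Cmod_gt_0; exact He0).
  set (a := fun n => F (RtoC (T ^ n) * e)).
  set (c := fun j => (1 - F (RtoC ((/ T) ^ j) * e))%C).
  assert (Hpos : forall n, (let w := Cminus z (RtoC (IZR (Z.of_nat n))) in
          Cmult (Cmult (ps1 k T w) (ps2 k T w)) (ps k T w)) = (a n - a (S n))%C).
  { intros n. cbv zeta. rewrite prod_id by (first [lra | (rewrite shift_pos; fold e; rewrite Re_scal;
      apply Rmult_le_pos; [apply pow_le; left; apply exp_pos | lra])]).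
    unfold T; rewrite shift_pos. fold T e. unfold a. f_equal. f_equal.
    simpl pow. rewrite RtoC_mult. ring. }
  assert (Hneg : forall j, (let w := Cminus z (RtoC (IZR (- Z.of_nat (S j)))) in
          Cmult (Cmult (ps1 k T w) (ps2 k T w)) (ps k T w)) = (c j - c (S j))%C).
  { intros j. cbv zeta. rewrite prod_id by (first [lra | (rewrite shift_neg; fold e; rewrite Re_scal;
      apply Rmult_le_pos; [apply pow_le; left; apply Rinv_0_lt_compat, exp_pos | lra])]).
    unfold T; rewrite shift_neg. fold T e. unfold c.
    replace (RtoC T * (RtoC ((/ T) ^ S j) * e))%C with (RtoC ((/ T) ^ j) * e)%C.
    ring. rewrite Cmult_assoc, <- RtoC_mult. f_equal. f_equal. simpl. field. lra. }
  assert (Ha : forall n, Cmod (a n) <= / (Cmod e * Cmod e) * (/ (T * T)) ^ n).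
  { intros n. unfold a. eapply Rle_trans. apply F_bound.
    rewrite Re_scal. apply Rmult_le_pos; [apply pow_le; lra | lra].
    apply Cmult_neq_0; [|exact He0]. intro E. apply RtoC_inj in E. exact (pow_nonzero T n ltac:(intro; lra) E).
    rewrite Cmod_mult, Cmod_R, Rabs_right by (apply Rle_ge, pow_le; lra).
    right. rewrite pow_inv, Rpow_mult_distr. field. split; [apply pow_nonzero; intro; lra | intro; lra]. }
  assert (Hc : forall n, Cmod (c n) <= (Cmod e * (2 + Cmod e)) * (/ T) ^ n).
  { intros n. unfold c. replace (1 - F (RtoC ((/ T) ^ n) * e))%C with (- (F (RtoC ((/ T) ^ n) * e) - 1))%C by ring.
    rewrite Cmod_opp. eapply Rle_trans. apply F_near1.
    rewrite Re_scal. apply Rmult_le_pos; [apply pow_le; left; apply Rinv_0_lt_compat; lra | lra].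
    assert (Hq0 : 0 <= (/ T) ^ n) by (apply pow_le; left; apply Rinv_0_lt_compat; lra).
    assert (Hq1 : (/ T) ^ n <= 1).
    { rewrite <- (pow1 n). apply pow_incr. split. left; apply Rinv_0_lt_compat; lra.
      rewrite <- Rinv_1. apply Rinv_le_contravar; lra. }
    rewrite Cmod_mult, Cmod_R, Rabs_right by lra.
    assert (0 <= (/ T) ^ n * Cmod e * (2 + Cmod e) - (/ T) ^ n * Cmod e * (2 + (/ T) ^ n * Cmod e)).
    { replace ((/ T) ^ n * Cmod e * (2 + Cmod e) - (/ T) ^ n * Cmod e * (2 + (/ T) ^ n * Cmod e))
        with (((/ T) ^ n * Cmod e) * ((1 - (/ T) ^ n) * Cmod e)) by ring.
      apply Rmult_le_pos; apply Rmult_le_pos; lra. }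
    lra. }
  assert (Hq1 : 0 <= / (T * T) < 1).
  { split. left; apply Rinv_0_lt_compat; nra. rewrite <- Rinv_1. apply Rinv_lt_contravar; nra. }
  assert (Hq2 : 0 <= / T < 1).
  { split. left; apply Rinv_0_lt_compat; nra. rewrite <- Rinv_1. apply Rinv_lt_contravar; nra. }
  destruct (tele_all a (/ (Cmod e * Cmod e)) _ Hq1 ltac:(left; apply Rinv_0_lt_compat; nra) Ha) as [A1 A2].
  destruct (tele_all c (Cmod e * (2 + Cmod e)) _ Hq2 ltac:(apply Rmult_le_pos; lra) Hc) as [C1 C2].
  split; [|split].
  - eapply ex_series_ext; [|exact A1]. intros n. cbv beta. rewrite <- (Hpos n). reflexivity.
  - eapply ex_series_ext; [|exact C1]. intros n. cbv beta. rewrite <- (Hneg n). reflexivity.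
  - exists (a O), (c O). split; [|split].
    + eapply is_series_ext; [|exact A2]. intros n. exact (eq_sym (Hpos n)).
    + eapply is_series_ext; [|exact C2]. intros n. exact (eq_sym (Hneg n)).
    + unfold a, c. rewrite !pow_O. ring.
Qed.

Theorem lemma8p6 (theta : R) (Htheta : 0 < theta) :
  exists psi psi1 psi2 : C -> C,
    Hinf0 theta psi /\ Hinf0 theta psi1 /\ Hinf0 theta psi2 /\
    forall z : C, strip theta z ->
      sumZ (fun n : Z =>
              let w := Cminus z (RtoC (IZR n)) in
              Cmult (Cmult (psi1 w) (psi2 w)) (psi w))
           (RtoC 1).
Proof.
  set (k := / (3 * theta)).
  assert (Hk : 0 < k) by (unfold k; apply Rinv_0_lt_compat; lra).
  assert (Hkt : 3 * k * theta <= 1) by (unfold k; right; field; lra).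
  set (T := exp (3 * k)).
  assert (HT : 1 <= T) by (unfold T; generalize (exp_ineq1 (3 * k) ltac:(lra)); lra).
  exists (ps k T), (ps1 k T), (ps2 k T).
  split; [|split; [|split]].
  - split. apply (holo_ps theta k T); assumption.
    apply (decay_bound _ theta k ((T - 1) * (T + 3)) Hk). apply Rmult_le_pos; lra.
    apply dec_ps; assumption.
  - split. apply (holo_ps1 theta k T); assumption.
    apply (decay_bound _ theta k 1 Hk). lra. apply dec_ps1; assumption.
  - split. apply (holo_ps2 theta k T); assumption.
    apply (decay_bound _ theta k 1 Hk). lra. apply dec_ps2; assumption.
  - intros z Hz. apply (sum_part theta k z Hk Hkt Hz).
Qed.
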